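(* Let $n\in\mathbb N_+$ and let $\nu$ be a probability measure on $\mathbb R$ with compact support such that $\int_\mathbb R\lambda\,d\nu=0$. Let $\lambda_{\max}=\max\operatorname{supp}\nu$ and suppose $g(\lambda)=\nu\{x\ge\lambda\}^{1/n}$ is concave on $(-\infty,\lambda_{\max})$. Then $g(-t\lambda_{\max})\ge1-\frac{1}{\sqrt{nt}}$ for all $t>0$. *)

(* Defs.v *)
From Stdlib Require Import Reals Lra.
Open Scope R_scope.

(* A probability measure nu on R with compact support is encoded by its
   (upper) tail function  G lam = nu [lam, +oo)  (Lebesgue-Stieltjes
   correspondence): G is nonincreasing, left-continuous, equal to 1 far
   to the left and to 0 far to the right (M bounds the support:
   supp nu is contained in [-M, M]). *)
Definition compact_prob_tail (G : R -> R) (M : R) : Prop :=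
  (forall x y, x <= y -> G y <= G x) /\
  (forall x eps, 0 < eps -> exists delta, 0 < delta /\
      forall y, x - delta < y <= x -> Rabs (G y - G x) < eps) /\
  (forall x, x <= - M -> G x = 1) /\
  (forall x, M < x -> G x = 0).

(* Mean of nu, via the layer-cake formula
   int lam dnu = int_0^M nu[lam,oo) dlam - int_{-M}^0 (1 - nu[lam,oo)) dlam.
   The condition "int lam dnu = 0": *)
Definition tail_mean_zero (G : R -> R) (M : R) : Prop :=
  exists (pr1 : Riemann_integrable G 0 M)
         (pr2 : Riemann_integrable (fun x => 1 - G x) (- M) 0),
    RiemannInt pr1 - RiemannInt pr2 = 0.

Definition is_max_supp (G : R -> R) (lmax : R) : Prop :=
  is_lub (fun x => 0 < G x) lmax.

Definition nroot (n : nat) (x : R) : R :=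
  if Rle_dec x 0 then 0 else Rpower x (/ INR n).

Definition concave_below (f : R -> R) (b : R) : Prop :=
  forall x y s, x < b -> y < b -> 0 <= s <= 1 ->
    s * f x + (1 - s) * f y <= f (s * x + (1 - s) * y).

(* Main.v *)
Require Import Defs.
From Stdlib Require Import Reals Lra.
Open Scope R_scope.

Lemma bern (n : nat) (s : R) : 0 <= s <= 1 -> (1 - s) ^ n * (1 + INR n * s) <= 1.
Proof.
  intros Hs. induction n as [|n IH].
  - simpl. lra.
  - rewrite S_INR. simpl.
    assert (H0 : 0 <= (1 - s) ^ n) by (apply pow_le; lra).
    assert (Hn : 0 <= INR n) by apply pos_INR.
    assert (E : (1 - s) * ((1 - s) ^ n) * (1 + (INR n + 1) * s)
              = (1 - s) ^ n * (1 + INR n * s) - (1 - s) ^ n * (INR n * s * s + s * s)) by ring.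
    rewrite E.
    assert (0 <= (1 - s) ^ n * (INR n * s * s + s * s)).
    { apply Rmult_le_pos; [lra|]. nra. }
    lra.
Qed.

Lemma final_step (n : nat) (t x : R) : (1 <= n)%nat -> 0 < t ->
  t / (1 + t) <= x -> nroot n x >= 1 - 1 / sqrt (INR n * t).
Proof.
  intros Hn Ht Hx.
  assert (HnR : 1 <= INR n) by (apply (le_INR 1 n) in Hn; simpl in Hn; lra).
  assert (Hnt : 0 < INR n * t) by nra.
  set (r := sqrt (INR n * t)).
  assert (Hr : r * r = INR n * t) by (apply sqrt_sqrt; lra).
  assert (Hr0 : 0 < r) by (apply sqrt_lt_R0; lra).
  assert (Hx0 : 0 < x).
  { apply Rlt_le_trans with (t / (1 + t)); auto. apply Rdiv_lt_0_compat; lra. }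
  unfold nroot. destruct (Rle_dec x 0) as [H|H]; [lra|].
  destruct (Rle_dec r 1) as [Hr1|Hr1].
  - assert (1 / r >= 1).
    { unfold Rdiv. rewrite Rmult_1_l. apply Rle_ge.
      rewrite <- Rinv_1. apply Rinv_le_contravar; lra. }
    unfold Rpower. pose proof (exp_pos (/ INR n * ln x)). lra.
  - set (s := 1 / r).
    assert (Hs : 0 < s < 1).
    { unfold s. split. apply Rdiv_lt_0_compat; lra.
      apply (Rmult_lt_reg_r r); try lra. field_simplify; lra. }
    assert (Hb := bern n s ltac:(lra)).
    assert (Hq : 0 < (1 - s) ^ n) by (apply pow_lt; lra).
    assert (Hns : INR n * s = INR n / r) by (unfold s; field; lra).
    assert (Hkey : (1 - s) ^ n <= t / (1 + t)).
    { assert ((1 - s) ^ n <= / (1 + INR n * s)).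
      { apply (Rmult_le_reg_r (1 + INR n * s)). nra.
        rewrite Rinv_l; nra. }
      apply Rle_trans with (/ (1 + INR n * s)); auto.
      rewrite Hns. unfold Rdiv. 
      apply (Rmult_le_reg_r ((1 + t) * (1 + INR n * / r))).
      { apply Rmult_lt_0_compat; [lra|]. 
        assert (0 < INR n * / r) by (apply Rmult_lt_0_compat; [lra| apply Rinv_0_lt_compat; lra]). lra. }
      field_simplify; try lra.
      apply (Rmult_le_reg_r r); [lra|]. field_simplify; try lra. nra. }
    assert (Hle : (1 - s) ^ n <= x) by lra.
    assert (HR : Rpower ((1 - s) ^ n) (/ INR n) = 1 - s).
    { rewrite <- Rpower_pow by lra. rewrite Rpower_mult.
      rewrite Rinv_r by lra. apply Rpower_1. lra. }
    rewrite <- HR. apply Rle_ge. apply Rle_Rpower_l.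
    + left. apply Rinv_0_lt_compat. lra.
    + lra.
Qed.
Lemma intA (G : R -> R) (M c k : R) (pr1 : Riemann_integrable G 0 M) :
  0 <= c <= M -> (forall x, 0 < x < c -> G x <= k) -> (forall x, c < x < M -> G x <= 0) ->
  RiemannInt pr1 <= k * c.
Proof.
  intros Hc H1 H2.
  pose (pa := RiemannInt_P22 pr1 Hc). pose (pb := RiemannInt_P23 pr1 Hc).
  rewrite <- (RiemannInt_P26 pa pb pr1).
  assert (Ea := RiemannInt_P19 pa (RiemannInt_P14 0 c k) (proj1 Hc) ltac:(intros; unfold fct_cte; auto)).
  assert (Eb := RiemannInt_P19 pb (RiemannInt_P14 c M 0) (proj2 Hc) ltac:(intros; unfold fct_cte; auto)).
  rewrite RiemannInt_P15 in Ea, Eb. lra.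
Qed.

Lemma intB (G : R -> R) (M c k : R) (pr2 : Riemann_integrable (fun x => 1 - G x) (- M) 0) :
  - M <= c <= 0 -> (forall x, - M < x < c -> 0 <= 1 - G x) -> (forall x, c < x < 0 -> k <= 1 - G x) ->
  k * (- c) <= RiemannInt pr2.
Proof.
  intros Hc H1 H2.
  pose (pa := RiemannInt_P22 pr2 Hc). pose (pb := RiemannInt_P23 pr2 Hc).
  rewrite <- (RiemannInt_P26 pa pb pr2).
  assert (Ea := RiemannInt_P19 (RiemannInt_P14 (-M) c 0) pa (proj1 Hc) ltac:(intros; unfold fct_cte; auto)).
  assert (Eb := RiemannInt_P19 (RiemannInt_P14 c 0 k) pb (proj2 Hc) ltac:(intros; unfold fct_cte; auto)).
  rewrite RiemannInt_P15 in Ea, Eb. lra.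
Qed.

Theorem mainTheorem12 (n : nat) (G : R -> R) (M lmax : R) :
  (1 <= n)%nat ->
  compact_prob_tail G M ->
  tail_mean_zero G M ->
  is_max_supp G lmax ->
  concave_below (fun lam => nroot n (G lam)) lmax ->
  forall t : R, 0 < t ->
    nroot n (G (- t * lmax)) >= 1 - 1 / sqrt (INR n * t).
Proof.
  intros Hn [Hmono [Hlc [Hl Hr]]] [pr1 [pr2 Hm]] [Hub Hleast] _ t Ht.
  set (L := lmax) in *.
  assert (G0 : forall x, 0 <= G x).
  { intros x. rewrite <- (Hr (Rmax x (M + 1))).
    - apply Hmono, Rmax_l.
    - pose proof (Rmax_r x (M + 1)). lra. }
  assert (G1 : forall x, G x <= 1).
  { intros x. destruct (Rle_dec x (- M)) as [h|h].
    - rewrite Hl; lra.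
    - rewrite <- (Hl (- M)) by lra. apply Hmono. lra. }
  assert (HM : 0 <= M).
  { destruct (Rle_dec 0 M) as [h|h]; auto.
    pose proof (Hl 0 ltac:(lra)). pose proof (Hr 0 ltac:(lra)). lra. }
  assert (HLM1 : - M <= L).
  { apply Hub. rewrite Hl; lra. }
  assert (HLM2 : L <= M).
  { apply Hleast. intros x hx. destruct (Rle_dec x M) as [h|h]; auto.
    rewrite Hr in hx; lra. }
  assert (Gz : forall x, L < x -> G x = 0).
  { intros x hx. destruct (Rlt_dec 0 (G x)) as [h|h].
    - pose proof (Hub x h). lra.
    - pose proof (G0 x). lra. }
  assert (I1z : L <= 0 -> RiemannInt pr1 <= 0).
  { intros hL. pose proof (intA G M 0 0 pr1 ltac:(lra)
      ltac:(intros; lra) ltac:(intros x hx; rewrite Gz; lra)). lra. }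
  assert (HL0 : 0 <= L).
  { destruct (Rle_dec 0 L) as [h|h]; auto.
    pose proof (I1z ltac:(lra)).
    pose proof (intB G M L 1 pr2 ltac:(lra)
      ltac:(intros x _; pose proof (G1 x); lra)
      ltac:(intros x hx; rewrite Gz; lra)). lra. }
  apply (final_step n t); auto.
  destruct (Req_dec L 0) as [HL|HL].
  - replace (- t * L) with 0 by (rewrite HL; ring).
    assert (E : G 0 = 1).
    { destruct (Req_dec M 0) as [hM|hM].
      - apply Hl. lra.
      - destruct (Rlt_dec (G 0) 1) as [h|h]; [|pose proof (G1 0); lra].
        exfalso.
        destruct (Hlc 0 ((1 - G 0) / 2) ltac:(lra)) as [d [hd Hd]].
        set (c := Rmax (- M) (- d / 2)).
        assert (hc1 : - M <= c) by apply Rmax_l.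
        assert (hc2 : - d / 2 <= c) by apply Rmax_r.
        assert (hc3 : c < 0) by (unfold c; apply Rmax_lub_lt; lra).
        pose proof (I1z ltac:(lra)).
        pose proof (intB G M c ((1 - G 0) / 2) pr2 ltac:(lra)
          ltac:(intros x _; pose proof (G1 x); lra)
          ltac:(intros x hx; pose proof (Hd x ltac:(lra)) as hh;
                apply Rabs_def2 in hh; lra)).
        assert (0 < (1 - G 0) / 2 * - c) by (apply Rmult_lt_0_compat; lra).
        lra. }
    rewrite E. apply (Rmult_le_reg_r (1 + t)); [lra|].
    unfold Rdiv. rewrite Rmult_assoc, Rinv_l by lra. lra.
  - assert (HLp : 0 < L) by lra.
    set (u := - t * L).
    assert (Hu : u < 0) by (unfold u; nra).
    assert (Gu : t * (1 - G u) <= G u).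
    { destruct (Rle_dec u (- M)) as [h|h].
      - rewrite Hl by lra. lra.
      - pose proof (intA G M L (G u) pr1 ltac:(lra)
          ltac:(intros x hx; apply Hmono; lra)
          ltac:(intros x hx; rewrite Gz; lra)).
        pose proof (intB G M u (1 - G u) pr2 ltac:(lra)
          ltac:(intros x _; pose proof (G1 x); lra)
          ltac:(intros x hx; pose proof (Hmono u x ltac:(lra)); lra)).
        assert (HH : (t * (1 - G u)) * L <= G u * L) by (unfold u in *; nra).
        apply Rmult_le_reg_r in HH; lra. }
    apply (Rmult_le_reg_r (1 + t)); [lra|].
    unfold Rdiv. rewrite Rmult_assoc, Rinv_l by lra. lra.
Qed.
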